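(* Let $p$ be a probability distribution on $\mathbb{N}$ with generating function $f_p(z)=\sum_{n\geq 0}p_nz^n$ and mean $m=f_p'(1)\leq 1$, and let $f_q$ be the generating function of the progeny $q$ of $p$. Let $R\geq 1$ be the radius of convergence of the power series $f_p$. Let $r\in(0,R)$ and let $p^{(r)}$ be the distribution with generating function $f_{p^{(r)}}(z)=f_p(rz)/f_p(r)$, and suppose that its mean $m_r=rf_p'(r)/f_p(r)$ satisfies $m_r\leq 1$. Then the progeny $q^{(\rho)}$ of $p^{(r)}$ has generating function $$f_{q^{(\rho)}}(z)=\frac{f_q(\rho z)}{f_q(\rho)},\qquad\text{where } \rho \text{ is such that } r=f_q(\rho).$$
   Context: For a probability distribution $p$ on $\mathbb{N}=\{0,1,2,\ldots\}$, the Galton–Watson (branching) process governed by $p$ is the Markov chain $(Z_n)_{n\geq 0}$ on $\mathbb{N}$ with $Z_0=1$ and $Z_{n+1}=\sum_{k=1}^{Z_n}X_{n,k}$, where $(X_{n,k})$ are i.i.d. with distribution $p$. If the mean of $p$ is at most $1$, then $S=\sum_{n=0}^{\infty}Z_n$ is almost surely finite and its distribution $q$ on $\mathbb{N}^+$ is called the progeny of $p$; its generating function satisfies $f_q(z)=z f_p(f_q(z))$ for $|z|\leq 1$. *)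

(* Defs.v *)
From Stdlib Require Import Reals.
From Coquelicot Require Import Coquelicot.
Open Scope R_scope.

Definition is_distribution (p : nat -> R) : Prop :=
  (forall n, 0 <= p n) /\ is_series p 1.

Fixpoint conv_pow (p : nat -> R) (k : nat) : nat -> R :=
  match k with
  | O => fun n => if Nat.eqb n 0 then 1 else 0
  | S k' => fun n => sum_f_R0 (fun i => p i * conv_pow p k' (n - i)%nat) n
  end.

(* Transition probabilities of the Galton-Watson chain:
   P(Z_{t+1} = l | Z_t = j) = p^{*j}(l). *)
Definition gw_trans (p : nat -> R) (j l : nat) : R := conv_pow p j l.

(* gw_ext p k j s = P_j( Z_0 + ... + Z_{k-1} = s  and  Z_k = 0 )
   for the Galton-Watson chain started at Z_0 = j.  (In the recursive step the
   next state l can be restricted to l <= s - j since it contributes to the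
   remaining sum, or must be 0 when k' = 0.) *)
Fixpoint gw_ext (p : nat -> R) (k j s : nat) : R :=
  match k with
  | O => if andb (Nat.eqb j 0) (Nat.eqb s 0) then 1 else 0
  | S k' =>
      if Nat.leb j s
      then sum_f_R0 (fun l => gw_trans p j l * gw_ext p k' l (s - j)%nat) (s - j)
      else 0
  end.

(* Progeny q of p: q_n = P(S = n), S = sum_n Z_n, Z_0 = 1.
   Since every generation before extinction is nonempty, S = n iff
   Z_0 + ... + Z_{n-1} = n and Z_n = 0. *)
Definition progeny (p : nat -> R) (n : nat) : R := gw_ext p n 1 n.

Definition gf (p : nat -> R) (z : R) : R := PSeries p z.

Definition tilt (p : nat -> R) (r : R) (n : nat) : R := p n * r ^ n / gf p r.

(* Main.v *)
Require Import Defs.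
From Stdlib Require Import Reals Lra Lia Arith.
From Coquelicot Require Import Coquelicot.
Open Scope R_scope.

Lemma conv_pow_nonneg p : (forall n, 0 <= p n) -> forall j l, 0 <= conv_pow p j l.
Proof.
  intros Hp j; induction j; intros l; simpl.
  - destruct (Nat.eqb l 0); lra.
  - apply cond_pos_sum; intros; apply Rmult_le_pos; auto.
Qed.

Lemma gw_ext_nonneg p : (forall n, 0 <= p n) -> forall k j s, 0 <= gw_ext p k j s.
Proof.
  intros Hp k; induction k; intros j s; simpl.
  - destruct (andb _ _); lra.
  - destruct (Nat.leb j s); [|lra].
    apply cond_pos_sum; intros; apply Rmult_le_pos; auto.
    unfold gw_trans; apply conv_pow_nonneg; auto.
Qed.

Lemma gw_ext_big p k l t : (t < l)%nat -> gw_ext p k l t = 0.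
Proof.
  intros H; destruct k; simpl.
  - destruct l; [lia|]. reflexivity.
  - replace (Nat.leb l t) with false; [reflexivity|].
    symmetry; apply Nat.leb_gt; lia.
Qed.

Lemma sum_delta0 (a : nat -> R) N :
  sum_f_R0 (fun l => (if Nat.eqb l 0 then 1 else 0) * a l) N = a 0%nat.
Proof.
  induction N; simpl; [ring|]. rewrite IHN. ring.
Qed.

Lemma gw_ext_j0 p k s : gw_ext p k 0 s = if Nat.eqb s 0 then 1 else 0.
Proof.
  revert s; induction k; intros s; simpl; [reflexivity|].
  rewrite Nat.sub_0_r. unfold gw_trans. simpl.
  rewrite (sum_delta0 (fun l => gw_ext p k l s)). apply IHk.
Qed.

Lemma gw_ext_stab p : forall k s j, (s <= k)%nat -> gw_ext p k j s = gw_ext p (S k) j s.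
Proof.
  induction k; intros s j Hs.
  - assert (s = 0%nat) by lia; subst.
    destruct j; simpl; [ring| reflexivity].
  - destruct j. { rewrite !gw_ext_j0; reflexivity. }
    cbn [gw_ext]. destruct (Nat.leb (S j) s) eqn:E; [|reflexivity].
    apply sum_eq; intros. f_equal. apply IHk. apply Nat.leb_le in E; lia.
Qed.

Lemma gw_ext_mono p : (forall n, 0 <= p n) -> forall k j s, gw_ext p k j s <= gw_ext p (S k) j s.
Proof.
  intros Hp k; induction k; intros j s.
  - change (gw_ext p 0 j s) with (if andb (Nat.eqb j 0) (Nat.eqb s 0) then 1 else 0).
    destruct (Nat.eqb j 0) eqn:Ej; destruct (Nat.eqb s 0) eqn:Es; simpl andb;
      try apply gw_ext_nonneg; auto.
    apply Nat.eqb_eq in Ej, Es; subst. simpl. lra.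
  - cbn [gw_ext]. destruct (Nat.leb j s); [|lra].
    apply sum_Rle; intros. apply Rmult_le_compat_l; auto.
    unfold gw_trans; apply conv_pow_nonneg; auto.
Qed.

Lemma gw_ext_stab_d p j s : forall d, gw_ext p s j s = gw_ext p (s + d) j s.
Proof.
  induction d. { rewrite Nat.add_0_r; reflexivity. }
  rewrite Nat.add_succ_r, <- gw_ext_stab by lia. exact IHd.
Qed.

Lemma gw_ext_le_diag p : (forall n, 0 <= p n) -> forall k j s, gw_ext p k j s <= gw_ext p s j s.
Proof.
  intros Hp k j s.
  assert (B : forall d k, gw_ext p k j s <= gw_ext p (k + d) j s).
  { induction d; intros k'. rewrite Nat.add_0_r; lra.
    rewrite Nat.add_succ_r. eapply Rle_trans; [apply IHd|apply gw_ext_mono; auto]. }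
  destruct (le_lt_dec k s).
  - replace s with (k + (s - k))%nat at 2 by lia. apply B.
  - rewrite (gw_ext_stab_d p j s (k - s)). replace (s + (k - s))%nat with k by lia. lra.
Qed.

Lemma sum_zero (a : nat -> R) N : (forall n, (n <= N)%nat -> a n = 0) -> sum_f_R0 a N = 0.
Proof.
  intros H; induction N; simpl. apply H; lia.
  rewrite IHN by (intros; apply H; lia). rewrite H by lia. ring.
Qed.

Lemma sum_extend (a : nat -> R) t M : (t <= M)%nat -> (forall l, (t < l)%nat -> a l = 0) ->
  sum_f_R0 a t = sum_f_R0 a M.
Proof.
  intros H Hz; induction M.
  - assert (t = 0%nat) by lia; subst; reflexivity.
  - destruct (Nat.eq_dec t (S M)). subst; reflexivity.
    simpl. rewrite <- IHM by lia. rewrite (Hz (S M)) by lia. ring.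
Qed.

Lemma sum_mono (a : nat -> R) N M : (forall n, 0 <= a n) -> (N <= M)%nat ->
  sum_f_R0 a N <= sum_f_R0 a M.
Proof.
  intros Ha H; induction M.
  - assert (N = 0%nat) by lia; subst; lra.
  - destruct (Nat.eq_dec N (S M)). subst; lra.
    simpl. specialize (IHM ltac:(lia)). specialize (Ha (S M)). lra.
Qed.

Lemma reindex (g : nat -> R) N j : (j <= N)%nat ->
  sum_f_R0 (fun s => if Nat.leb j s then g (s - j)%nat else 0) N = sum_f_R0 g (N - j).
Proof.
  revert j; induction N; intros j H.
  - assert (j = 0%nat) by lia; subst. reflexivity.
  - rewrite tech5. destruct (Nat.eq_dec j (S N)).
    + subst. rewrite sum_zero.
      * rewrite Nat.leb_refl, !Nat.sub_diag. simpl. ring.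
      * intros n Hn. destruct (Nat.leb (S N) n) eqn:E; [apply Nat.leb_le in E; lia|reflexivity].
    + rewrite IHN by lia.
      replace (S N - j)%nat with (S (N - j)) by lia.
      replace (Nat.leb j (S N)) with true by (symmetry; apply Nat.leb_le; lia).
      rewrite tech5. replace (S N - j)%nat with (S (N - j)) by lia. reflexivity.
Qed.

Lemma sum_switch (u : nat -> nat -> R) M :
  sum_f_R0 (fun t => sum_f_R0 (fun l => u l t) M) M =
  sum_f_R0 (fun l => sum_f_R0 (fun t => u l t) M) M.
Proof.
  rewrite <- !sum_n_Reals.
  rewrite (sum_n_ext (fun t => sum_f_R0 (fun l => u l t) M) (fun t => sum_n (fun l => u l t) M))
    by (intros; rewrite sum_n_Reals; reflexivity).
  rewrite (sum_n_ext (fun l => sum_f_R0 (fun t => u l t) M) (fun l => sum_n (fun t => u l t) M))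
    by (intros; rewrite sum_n_Reals; reflexivity).
  apply (sum_n_switch (G:=R_AbelianMonoid) (fun t l => u l t)).
Qed.

Definition Ps p k j N := sum_f_R0 (fun s => gw_ext p k j s) N.

Lemma Ps_rec p k j M :
  Ps p (S k) j (M + j) = sum_f_R0 (fun l => conv_pow p j l * Ps p k l M) M.
Proof.
  unfold Ps. cbn [gw_ext].
  rewrite (reindex (fun t => sum_f_R0 (fun l => gw_trans p j l * gw_ext p k l t) t)) by lia.
  replace (M + j - j)%nat with M by lia.
  rewrite (sum_eq _ (fun t => sum_f_R0 (fun l => gw_trans p j l * gw_ext p k l t) M)).
  2:{ intros t Ht. apply sum_extend; auto. intros l Hl. rewrite gw_ext_big by lia. ring. }
  rewrite sum_switch. apply sum_eq; intros l _. rewrite scal_sum. apply sum_eq; intros.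
  unfold gw_trans; ring.
Qed.

Lemma Ps_mono p k j N M : (forall n, 0 <= p n) -> (N <= M)%nat -> Ps p k j N <= Ps p k j M.
Proof. intros; apply sum_mono; auto. intros; apply gw_ext_nonneg; auto. Qed.

Lemma Ps_0 p j N : Ps p 0 j N = if Nat.eqb j 0 then 1 else 0.
Proof.
  unfold Ps; induction N.
  - simpl; destruct j; reflexivity.
  - rewrite tech5, IHN. destruct j; simpl; ring.
Qed.

Lemma partial_le (a : nat -> R) l N : is_series a l -> (forall n, 0 <= a n) -> sum_f_R0 a N <= l.
Proof.
  intros H Ha. rewrite <- sum_n_Reals.
  apply (is_lim_seq_incr_compare (sum_n a) l H).
  intros n. rewrite sum_Sn. specialize (Ha (S n)). change (plus (sum_n a n) (a (S n))) with (sum_n a n + a (S n)). lra.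
Qed.

Lemma term_le (a : nat -> R) l n : is_series a l -> (forall n, 0 <= a n) -> a n <= l.
Proof.
  intros H Ha. eapply Rle_trans; [|apply (partial_le a l n H Ha)].
  destruct n; simpl; [lra|]. pose proof (cond_pos_sum a n Ha). lra.
Qed.

Lemma finite_support (a : nat -> R) N : (forall n, (N < n)%nat -> a n = 0) -> is_series a (sum_f_R0 a N).
Proof.
  intros H. assert (G : is_lim_seq (sum_n a) (sum_f_R0 a N)); [|exact G].
  apply (is_lim_seq_ext_loc (fun _ => sum_f_R0 a N)).
  - exists N. intros n Hn. rewrite sum_n_Reals. apply sum_extend; auto.
  - apply is_lim_seq_const.
Qed.

Lemma series_lim_eps (a : nat -> R) l eps : is_series a l -> 0 < eps ->
  exists N, forall n, (N <= n)%nat -> Rabs (sum_f_R0 a n - l) < eps.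
Proof.
  intros H He. assert (H' : is_lim_seq (sum_n a) l) by exact H.
  apply is_lim_seq_spec in H'. destruct (H' (mkposreal eps He)) as [N HN].
  exists N. intros n Hn. rewrite <- sum_n_Reals. apply HN; auto.
Qed.

Lemma pser_is p x : is_distribution p -> 0 <= x <= 1 -> is_series (fun n => p n * x ^ n) (PSeries p x).
Proof.
  intros [Hp Hs] Hx. unfold PSeries. apply Series_correct.
  apply (@ex_series_le R_AbsRing R_CompleteNormedModule _ p).
  - intros n. change (norm (p n * x ^ n)) with (Rabs (p n * x ^ n)).
    rewrite Rabs_pos_eq.
    + pose proof (pow_incr x 1 n Hx). rewrite pow1 in H.
      pose proof (Hp n). pose proof (pow_le x n (proj1 Hx)). nra.
    + apply Rmult_le_pos; auto. apply pow_le; lra.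
  - exists 1; auto.
Qed.

Lemma pser_nonneg p x : is_distribution p -> 0 <= x <= 1 -> 0 <= PSeries p x.
Proof.
  intros Hd Hx. eapply Rle_trans; [|apply (term_le _ _ 0 (pser_is p x Hd Hx))].
  - simpl. rewrite Rmult_1_r. apply (proj1 Hd).
  - intros n. apply Rmult_le_pos; [apply (proj1 Hd)|apply pow_le; lra].
Qed.

Lemma pser_one p : is_distribution p -> PSeries p 1 = 1.
Proof.
  intros [Hp Hs]. unfold PSeries. rewrite (Series_ext _ p). apply is_series_unique; auto.
  intros n; rewrite pow1; ring.
Qed.

Lemma pser_mono p x y : is_distribution p -> 0 <= x <= y -> y <= 1 -> PSeries p x <= PSeries p y.
Proof.
  intros Hd Hxy Hy. unfold PSeries. apply Series_le.
  - intros n. pose proof (proj1 Hd n). split.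
    + apply Rmult_le_pos; auto; apply pow_le; lra.
    + apply Rmult_le_compat_l; auto. apply pow_incr; lra.
  - eexists; apply (pser_is p y Hd); lra.
Qed.

Lemma pser_le1 p x : is_distribution p -> 0 <= x <= 1 -> PSeries p x <= 1.
Proof.
  intros Hd Hx. rewrite <- (pser_one p Hd). apply pser_mono; auto; lra.
Qed.

Lemma cauchy_gf p x : is_distribution p -> 0 <= x <= 1 -> forall j,
  is_series (fun l => conv_pow p j l * x ^ l) (PSeries p x ^ j).
Proof.
  intros Hd Hx j. pose proof (proj1 Hd) as Hp. induction j.
  - assert (F := finite_support (fun l => (if Nat.eqb l 0 then 1 else 0) * x ^ l) 0%nat
      ltac:(intros n Hn; destruct n; [lia|]; simpl; ring)).
    simpl sum_f_R0 in F. simpl. rewrite Rmult_1_r in F. exact F.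
  - pose proof (is_series_mult_pos _ _ _ _ (pser_is p x Hd Hx) IHj) as M.
    simpl pow. eapply is_series_ext; [|apply M].
    + intros n. simpl. rewrite Rmult_comm, scal_sum. apply sum_eq. intros i Hi.
      replace (x ^ n) with (x ^ i * x ^ (n - i)) by (rewrite <- pow_add; f_equal; lia). ring.
    + intros n; apply Rmult_le_pos; auto; apply pow_le; lra.
    + intros n; apply Rmult_le_pos; [apply conv_pow_nonneg; auto|apply pow_le; lra].
Qed.

Lemma conv_partial_le1 p j M : is_distribution p -> sum_f_R0 (fun l => conv_pow p j l) M <= 1.
Proof.
  intros Hd. pose proof (cauchy_gf p 1 Hd ltac:(lra) j) as H. rewrite pser_one, pow1 in H; auto.
  eapply Rle_trans; [|apply (partial_le _ _ M H)].
  - right. apply sum_eq; intros; rewrite pow1; ring.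
  - intros n; rewrite pow1, Rmult_1_r; apply conv_pow_nonneg; apply Hd.
Qed.

Lemma Ps_le1 p : is_distribution p -> forall k j N, Ps p k j N <= 1.
Proof.
  intros Hd k; induction k; intros j N.
  - rewrite Ps_0; destruct (Nat.eqb j 0); lra.
  - destruct (le_lt_dec j N).
    + replace N with ((N - j) + j)%nat by lia. rewrite Ps_rec.
      eapply Rle_trans; [|apply (conv_partial_le1 p j (N - j) Hd)].
      apply sum_Rle; intros. pose proof (conv_pow_nonneg p (proj1 Hd) j n).
      specialize (IHk n (N - j)%nat). nra.
    + unfold Ps. rewrite sum_zero; [lra|]. intros; apply gw_ext_big; lia.
Qed.

Fixpoint xs (p : nat -> R) (k : nat) : R :=
  match k with O => 0 | S k' => PSeries p (xs p k') end.

Lemma xs_bounds p : is_distribution p -> forall k, 0 <= xs p k <= 1.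
Proof.
  intros Hd k; induction k; simpl; [lra|].
  split; [apply pser_nonneg|apply pser_le1]; auto.
Qed.

Lemma LB p : is_distribution p -> forall k j eps, 0 < eps ->
  exists N, Ps p k j N > xs p k ^ j - eps.
Proof.
  intros Hd k. pose proof (proj1 Hd) as Hp. induction k; intros j eps He.
  - exists 0%nat. rewrite Ps_0. destruct j; simpl; lra.
  - assert (He2 : 0 < eps / 2) by lra.
    destruct (series_lim_eps _ _ _ (cauchy_gf p (xs p k) Hd (xs_bounds p Hd k) j) He2) as [L HL].
    specialize (HL L (le_n _)).
    assert (U : forall L, exists M, forall l, (l <= L)%nat -> Ps p k l M > xs p k ^ l - eps / 2).
    { induction L0 as [|L0 IH].
      - destruct (IHk 0%nat _ He2) as [M HM]. exists M. intros l Hl.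
        assert (l = 0%nat) by lia; subst; auto.
      - destruct IH as [M1 H1]. destruct (IHk (S L0) _ He2) as [M2 H2].
        exists (Nat.max M1 M2). intros l Hl.
        destruct (Nat.eq_dec l (S L0)).
        + subst. eapply Rlt_le_trans; [apply H2|apply Ps_mono; auto; lia].
        + eapply Rlt_le_trans; [apply H1; lia|apply Ps_mono; auto; lia]. }
    destruct (U L) as [M HM].
    set (M' := Nat.max M L).
    exists (M' + j)%nat. rewrite Ps_rec.
    assert (S1 : sum_f_R0 (fun l => conv_pow p j l * Ps p k l M) L <= sum_f_R0 (fun l => conv_pow p j l * Ps p k l M') M').
    { eapply Rle_trans; [|apply sum_mono].
      - apply sum_Rle. intros n Hn. apply Rmult_le_compat_l; [apply conv_pow_nonneg; auto|].
        apply Ps_mono; auto; lia.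
      - intros n. apply Rmult_le_pos; [apply conv_pow_nonneg; auto|]. unfold Ps; apply cond_pos_sum. intros; apply gw_ext_nonneg; auto.
      - lia. }
    assert (S2 : sum_f_R0 (fun l => conv_pow p j l * (xs p k ^ l - eps / 2)) L <= sum_f_R0 (fun l => conv_pow p j l * Ps p k l M) L).
    { apply sum_Rle. intros n Hn. apply Rmult_le_compat_l; [apply conv_pow_nonneg; auto|].
      left. apply HM; auto. }
    assert (S3 : sum_f_R0 (fun l => conv_pow p j l * (xs p k ^ l - eps / 2)) L =
                 sum_f_R0 (fun l => conv_pow p j l * xs p k ^ l) L - eps / 2 * sum_f_R0 (fun l => conv_pow p j l) L).
    { rewrite scal_sum, <- minus_sum. apply sum_eq; intros; ring. }
    pose proof (conv_partial_le1 p j L Hd).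
    assert (0 <= sum_f_R0 (fun l => conv_pow p j l) L) by (apply cond_pos_sum; intros; apply conv_pow_nonneg; auto).
    simpl xs. apply Rabs_def2 in HL. nra.
Qed.

Lemma bern (x : R) n : 0 <= x -> x ^ n >= 1 + INR n * (x - 1).
Proof.
  intros Hx; induction n. { simpl; lra. }
  change (x ^ S n) with (x * x ^ n). rewrite S_INR.
  pose proof (pos_INR n). assert (0 <= INR n * ((x-1)*(x-1))) by (apply Rmult_le_pos; [lra| pose proof (Rle_0_sqr (x-1)) as Hq; unfold Rsqr in Hq; lra]).
  assert (x * x^n >= x*(1 + INR n*(x-1))) by (apply Rmult_ge_compat_l; lra).
  assert (x*(1 + INR n*(x-1)) = x + INR n * (x-1) + INR n * ((x-1)*(x-1))) by ring. lra.
Qed.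

Lemma bern_strict (x : R) n : 0 <= x < 1 -> x ^ (S (S n)) > 1 + INR (S (S n)) * (x - 1).
Proof.
  intros Hx.
  assert (Hs : 0 < (x-1)*(x-1)) by (pose proof (Rsqr_pos_lt (x-1) ltac:(lra)) as Hq; unfold Rsqr in Hq; lra).
  induction n.
  - simpl. assert (x * (x * 1) = 1 + (1+1)*(x-1) + (x-1)*(x-1)) by ring. lra.
  - change (x ^ S (S (S n))) with (x * x ^ (S (S n))).
    rewrite (S_INR (S (S n))) in *. rewrite (S_INR (S n)) in *. rewrite S_INR in *.
    pose proof (pos_INR n). assert (0 <= INR n * ((x-1)*(x-1))) by (apply Rmult_le_pos; lra).
    assert (x * x^(S (S n)) >= x*(1 + (INR n + 1 + 1)*(x-1))) by (apply Rmult_ge_compat_l; lra).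
    assert (x*(1 + (INR n + 1 + 1)*(x-1)) = x + (INR n + 1 + 1) * (x-1) + INR n * ((x-1)*(x-1)) + 2 * ((x-1)*(x-1))) by ring.
    lra.
Qed.

Lemma all_zero (a : nat -> R) l : is_series a l -> (forall n, 0 <= a n) -> l <= 0 -> forall n, a n = 0.
Proof.
  intros H Ha Hl n. pose proof (term_le a l n H Ha). specialize (Ha n). lra.
Qed.

Lemma f_gt p m x : is_distribution p -> 0 < p 0%nat -> is_series (fun n => INR n * p n) m -> m <= 1 ->
  0 <= x < 1 -> x < PSeries p x.
Proof.
  intros Hd Hp0 Hm Hm1 Hx.
  destruct (Rlt_or_le x (PSeries p x)) as [|Hf]; auto. exfalso.
  set (h := fun n => p n * x ^ n - p n - (x - 1) * (INR n * p n)).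
  assert (Hh : is_series h (PSeries p x - 1 - (x - 1) * m)).
  { pose proof (is_series_minus _ _ _ _ (is_series_minus _ _ _ _ (pser_is p x Hd ltac:(lra)) (proj2 Hd))
        (is_series_scal_l (x - 1) _ _ Hm)) as H4. exact H4. }
  assert (Hpos : forall n, 0 <= h n).
  { intros n. unfold h. pose proof (bern x n ltac:(lra)). pose proof (proj1 Hd n).
    assert (h n = p n * (x ^ n - (1 + INR n * (x - 1)))) as E by (unfold h; ring).
    unfold h in E. rewrite E. apply Rmult_le_pos; lra. }
  assert (HL : PSeries p x - 1 - (x - 1) * m <= 0) by nra.
  pose proof (all_zero h _ Hh Hpos HL) as Hz.
  assert (Hp2 : forall n, (1 < n)%nat -> p n = 0).
  { intros n Hn. destruct n as [|[|n]]; try lia.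
    specialize (Hz (S (S n))). unfold h in Hz.
    pose proof (bern_strict x n Hx).
    assert (p (S (S n)) * (x ^ S (S n) - (1 + INR (S (S n)) * (x - 1))) = 0) by (rewrite <- Hz; ring).
    apply Rmult_integral in H0. destruct H0; auto. lra. }
  assert (Hh0 : is_series h 0).
  { pose proof (finite_support h 0 ltac:(intros; apply Hz)) as F. simpl in F. rewrite (Hz 0%nat) in F. exact F. }
  assert (EL : PSeries p x - 1 - (x - 1) * m = 0).
  { rewrite <- (is_series_unique _ _ Hh). apply is_series_unique; auto. }
  assert (Hm1' : m = 1) by nra.
  pose proof (finite_support p 1 ltac:(intros; apply Hp2; lia)) as F1.
  pose proof (finite_support (fun n => INR n * p n) 1 ltac:(intros n Hn; cbv beta; rewrite Hp2 by lia; ring)) as F2.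
  simpl in F1, F2.
  pose proof (is_series_unique _ _ F1) as U1. pose proof (is_series_unique _ _ (proj2 Hd)) as U1'.
  pose proof (is_series_unique _ _ F2) as U2. pose proof (is_series_unique _ _ Hm) as U2'.
  lra.
Qed.

Lemma CV_ge1 p : is_distribution p -> Rbar_le 1 (CV_radius p).
Proof.
  intros Hd. destruct (CV_radius_bounded p) as [Hub _]. apply Hub.
  exists 1. intros n. rewrite pow1, Rmult_1_r, Rabs_pos_eq by apply (proj1 Hd).
  apply (term_le p 1 n (proj2 Hd) (proj1 Hd)).
Qed.

Lemma xs_to1 p m : is_distribution p -> 0 < p 0%nat -> is_series (fun n => INR n * p n) m -> m <= 1 ->
  forall eps, 0 < eps -> exists k, xs p k > 1 - eps.
Proof.
  intros Hd Hp0 Hm Hm1 eps He.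
  assert (Hinc : forall k, xs p k <= xs p (S k)).
  { induction k. simpl. apply pser_nonneg; auto; lra.
    pose proof (xs_bounds p Hd k); pose proof (xs_bounds p Hd (S k)); simpl in *.
    apply pser_mono; auto; lra. }
  destruct (ex_finite_lim_seq_incr (xs p) 1 Hinc (fun k => proj2 (xs_bounds p Hd k))) as [l Hl].
  assert (Hl1 : l <= 1).
  { pose proof (is_lim_seq_le (xs p) (fun _ => 1) l 1 (fun k => proj2 (xs_bounds p Hd k)) Hl (is_lim_seq_const 1)). simpl in H. auto. }
  assert (Hl0 : 0 <= l).
  { pose proof (is_lim_seq_le (fun _ => 0) (xs p) 0 l (fun k => proj1 (xs_bounds p Hd k)) (is_lim_seq_const 0) Hl). simpl in H. auto. }
  assert (Hl' : l = 1).
  { destruct (Rle_lt_or_eq_dec l 1 Hl1) as [Hlt|]; auto. exfalso.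
    assert (Hc : continuity_pt (PSeries p) l).
    { apply PSeries_continuity. eapply Rbar_lt_le_trans; [|apply CV_ge1; auto].
      rewrite Rabs_pos_eq; auto. }
    pose proof (is_lim_seq_continuous _ _ _ Hc Hl) as H1.
    pose proof (proj1 (is_lim_seq_incr_1 _ _) Hl) as H2.
    pose proof (is_lim_seq_unique _ _ H1) as U1. pose proof (is_lim_seq_unique _ _ H2) as U2.
    simpl in U2. rewrite U2 in U1. injection U1 as U1.
    pose proof (f_gt p m l Hd Hp0 Hm Hm1 ltac:(lra)). lra. }
  subst l. apply is_lim_seq_spec in Hl. destruct (Hl (mkposreal eps He)) as [N HN].
  exists N. specialize (HN N (le_n _)). simpl in HN. apply Rabs_def2 in HN. lra.
Qed.

Lemma ML p m : is_distribution p -> 0 < p 0%nat -> is_series (fun n => INR n * p n) m -> m <= 1 ->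
  is_series (progeny p) 1.
Proof.
  intros Hd Hp0 Hm Hm1. pose proof (proj1 Hd) as Hp.
  assert (Hup : forall N, sum_f_R0 (progeny p) N <= 1).
  { intros N. eapply Rle_trans; [|apply (Ps_le1 p Hd N 1 N)]. unfold Ps, progeny.
    right. apply sum_eq. intros s Hs. rewrite (gw_ext_stab_d p 1 s (N - s)). f_equal; lia. }
  assert (Hlow : forall eps, 0 < eps -> exists N, sum_f_R0 (progeny p) N > 1 - eps).
  { intros eps He. destruct (xs_to1 p m Hd Hp0 Hm Hm1 (eps/2) ltac:(lra)) as [k Hk].
    destruct (LB p Hd k 1 (eps/2) ltac:(lra)) as [N HN]. exists N.
    assert (Ps p k 1 N <= sum_f_R0 (progeny p) N).
    { apply sum_Rle. intros. apply gw_ext_le_diag; auto. }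
    rewrite pow_1 in HN. lra. }
  assert (Hnn : forall n, 0 <= progeny p n) by (intros; apply gw_ext_nonneg; auto).
  assert (G : is_lim_seq (sum_n (progeny p)) 1); [|exact G].
  apply is_lim_seq_spec. intros eps. destruct (Hlow eps (cond_pos eps)) as [N HN].
  exists N. intros n Hn. rewrite sum_n_Reals.
  pose proof (sum_mono (progeny p) N n Hnn Hn). pose proof (Hup n).
  apply Rabs_def1; lra.
Qed.

Lemma sum_mult_r (An : nat -> R) N x : sum_f_R0 An N * x = sum_f_R0 (fun i => An i * x) N.
Proof. rewrite Rmult_comm, scal_sum. reflexivity. Qed.

Lemma T1 p r : gf p r <> 0 -> forall j l,
  conv_pow (tilt p r) j l = conv_pow p j l * r ^ l / gf p r ^ j.
Proof.
  intros HF j; induction j; intros l.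
  - simpl. destruct (Nat.eqb l 0) eqn:E.
    + apply Nat.eqb_eq in E; subst. simpl. field.
    + field.
  - simpl conv_pow.
    transitivity (sum_f_R0 (fun i => p i * conv_pow p j (l - i)) l * (r ^ l / gf p r ^ S j)).
    2:{ field. apply pow_nonzero; auto. }
    rewrite sum_mult_r. apply sum_eq. intros i Hi.
    rewrite IHj. unfold tilt.
    replace (r ^ l) with (r ^ i * r ^ (l - i)) by (rewrite <- pow_add; f_equal; lia).
    simpl. field. split; auto. apply pow_nonzero; auto.
Qed.

Lemma T2 p r : gf p r <> 0 -> r <> 0 -> forall k j s,
  r ^ j * gw_ext (tilt p r) k j s = gw_ext p k j s * r ^ s / gf p r ^ s.
Proof.
  intros HF Hr k; induction k; intros j s.
  - simpl. destruct (Nat.eqb j 0) eqn:Ej; destruct (Nat.eqb s 0) eqn:Es; simpl;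
      try (field; apply pow_nonzero; auto).
    apply Nat.eqb_eq in Ej, Es; subst. simpl. field.
  - cbn [gw_ext]. destruct (Nat.leb j s) eqn:E.
    + apply Nat.leb_le in E.
      transitivity (sum_f_R0 (fun l => gw_trans p j l * gw_ext p k l (s - j)) (s - j) * (r ^ s / gf p r ^ s)).
      2:{ field. apply pow_nonzero; auto. }
      rewrite (Rmult_comm (r ^ j)), !sum_mult_r.
      apply sum_eq. intros l Hl. unfold gw_trans. rewrite T1 by auto.
      pose proof (IHk l (s - j)%nat) as IH.
      replace (r ^ s) with (r ^ j * r ^ (s - j)) by (rewrite <- pow_add; f_equal; lia).
      replace (gf p r ^ s) with (gf p r ^ j * gf p r ^ (s - j)) by (rewrite <- pow_add; f_equal; lia).
      assert (gf p r ^ j <> 0) by (apply pow_nonzero; auto).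
      assert (gf p r ^ (s - j) <> 0) by (apply pow_nonzero; auto).
      transitivity (conv_pow p j l / gf p r ^ j * r ^ j * (r ^ l * gw_ext (tilt p r) k l (s - j))).
      { field. auto. }
      rewrite IH. field. split; auto.
    + field. apply pow_nonzero; auto.
Qed.

Lemma T3 p r : gf p r <> 0 -> r <> 0 -> forall n,
  progeny (tilt p r) n = progeny p n * (r / gf p r) ^ n / r.
Proof.
  intros HF Hr n. unfold progeny. pose proof (T2 p r HF Hr n 1 n) as H. rewrite pow_1 in H.
  unfold Rdiv. rewrite Rpow_mult_distr, pow_inv.
  apply (Rmult_eq_reg_l r); auto. rewrite H. field. split; auto. apply pow_nonzero; auto.
Qed.

Theorem proposition2 (p : nat -> R) (r : R) :
  is_distribution p ->
  p 1%nat <> 1 ->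
  ex_series (fun n => INR n * p n) ->
  Series (fun n => INR n * p n) <= 1 ->
  0 < r ->
  Rbar_lt (Finite r) (CV_radius p) ->
  r * Derive (gf p) r / gf p r <= 1 ->
  exists rho : R,
    0 < rho /\ ex_pseries (progeny p) rho /\ gf (progeny p) rho = r /\
    forall z : R, -1 <= z <= 1 ->
      gf (progeny (tilt p r)) z = gf (progeny p) (rho * z) / gf (progeny p) rho.
Proof.
  intros Hd Hp1 Hex Hm1 Hr Hrad Hmr.
  pose proof (proj1 Hd) as Hp.
  pose proof (Series_correct _ Hex) as Hm. set (m := Series (fun n => INR n * p n)) in *.
  assert (Hp0 : 0 < p 0%nat).
  { destruct (Rle_lt_or_eq_dec 0 (p 0%nat) (Hp 0%nat)) as [|E]; auto. exfalso.
    set (t := fun n => INR n * p n - p n).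
    assert (Ht : is_series t (m - 1)).
    { pose proof (is_series_minus _ _ _ _ Hm (proj2 Hd)) as H4. exact H4. }
    assert (Htp : forall n, 0 <= t n).
    { intros [|n]; unfold t. rewrite <- E; simpl; lra.
      rewrite S_INR. pose proof (pos_INR n). pose proof (Hp (S n)). nra. }
    pose proof (all_zero t _ Ht Htp ltac:(lra)) as Hz.
    assert (Hp2 : forall n, (1 < n)%nat -> p n = 0).
    { intros n Hn. destruct n as [|[|n]]; try lia.
      specialize (Hz (S (S n))). unfold t in Hz. rewrite !S_INR in Hz.
      pose proof (pos_INR n).
      assert ((INR n + 1) * p (S (S n)) = 0) by lra.
      apply Rmult_integral in H0. destruct H0; lra. }
    pose proof (finite_support p 1 ltac:(intros; apply Hp2; lia)) as F1. simpl in F1.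
    pose proof (is_series_unique _ _ F1) as U1. pose proof (is_series_unique _ _ (proj2 Hd)) as U1'.
    lra. }
  assert (Hrad' : Rbar_lt (Rabs r) (CV_radius p)) by (rewrite Rabs_pos_eq; auto; lra).
  assert (HisF : is_series (fun n => p n * r ^ n) (gf p r)).
  { apply is_pseries_R. apply PSeries_correct. apply CV_radius_inside; auto. }
  assert (HFpos : 0 < gf p r).
  { eapply Rlt_le_trans; [|apply (term_le _ _ 0 HisF)].
    - simpl; lra.
    - intros n; apply Rmult_le_pos; auto; apply pow_le; lra. }
  assert (HFnz : gf p r <> 0) by lra.
  assert (Htd : is_distribution (tilt p r)).
  { split.
    - intros n. unfold tilt. apply Rmult_le_pos; [apply Rmult_le_pos; auto; apply pow_le; lra|].
      left; apply Rinv_0_lt_compat; auto.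
    - pose proof (is_series_scal_r (/ gf p r) _ _ HisF) as H. rewrite Rinv_r in H by auto. exact H. }
  assert (Ht0 : 0 < tilt p r 0%nat).
  { unfold tilt. simpl. rewrite Rmult_1_r. apply Rdiv_lt_0_compat; auto. }
  assert (Htm : is_series (fun n => INR n * tilt p r n) (r * Derive (gf p) r / gf p r)).
  { pose proof (is_pseries_incr_1 _ _ _ (is_pseries_derive p r Hrad')) as H.
    apply is_pseries_R in H. pose proof (is_series_scal_r (/ gf p r) _ _ H) as H2.
    eapply is_series_ext; [|exact H2].
    intros [|n]; cbv beta; unfold tilt, PS_incr_1, PS_derive.
    - change (zero : R) with 0. simpl. ring.
    - match goal with |- ?a = ?b => change (@eq R a b) end. unfold Rdiv. rewrite !Rmult_assoc. reflexivity. }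
  pose proof (ML (tilt p r) _ Htd Ht0 Htm Hmr) as Hq1.
  set (rho := r / gf p r).
  assert (Hrho : 0 < rho) by (apply Rdiv_lt_0_compat; auto).
  assert (Hq : is_series (fun n => progeny p n * rho ^ n) r).
  { pose proof (is_series_scal_r r _ _ Hq1) as H. rewrite Rmult_1_l in H.
    eapply is_series_ext; [|exact H]. intros n. simpl. rewrite T3 by lra. unfold rho. field. lra. }
  assert (Hgq : gf (progeny p) rho = r).
  { unfold gf, PSeries. apply is_series_unique; auto. }
  exists rho. split; [auto|]. split.
  { exists r. apply is_pseries_R. exact Hq. }
  split; auto.
  intros z _. rewrite Hgq. unfold gf, PSeries.
  unfold Rdiv at 1. rewrite <- Series_scal_r. apply Series_ext. intros n.
  rewrite T3 by lra. rewrite Rpow_mult_distr. match goal with |- ?a = ?b => change (@eq R a b) end. unfold rho. field. lra.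
Qed.
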